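(* Let $\alpha\in(0,1)\cup(1,2]$ and let $\Phi_{AB}=|\Phi\rangle\langle\Phi|$ with $|\Phi\rangle_{AB}=\frac{1}{\sqrt d}\sum_{i=0}^{d-1}|i\rangle_A|i\rangle_B$ a maximally entangled state of Schmidt rank $d$ (for orthonormal sets $\{|i\rangle_A\}$, $\{|i\rangle_B\}$). Then $E^{\mathrm{sq}}_\alpha(A;B)_\Phi=\log d$.
   Context: All Hilbert spaces are finite-dimensional and $\log$ is the natural logarithm. For a positive semi-definite $M$ and function $f$, $f(M)$ applies $f$ only to nonzero eigenvalues (negative powers are generalized inverses). For a state $\rho_{ABE}$ and $\alpha\in(0,1)\cup(1,\infty)$, $$I_\alpha(A;B|E)_\rho=\frac{\alpha}{\alpha-1}\log\mathrm{Tr}\Big\{\Big(\rho_E^{(\alpha-1)/2}\,\mathrm{Tr}_A\big\{\rho_{AE}^{(1-\alpha)/2}\rho_{ABE}^{\alpha}\rho_{AE}^{(1-\alpha)/2}\big\}\,\rho_E^{(\alpha-1)/2}\Big)^{1/\alpha}\Big\}.$$ The Rényi squashed entanglement is $E^{\mathrm{sq}}_\alpha(A;B)_\rho=\frac12\inf\{I_\alpha(A;B|E)_\omega:\ \mathrm{Tr}_E\omega_{ABE}=\rho_{AB}\}$ over all extensions on finite-dimensional $\mathcal{H}_E$. *)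

(* Defs.v *)
From HB Require Import structures.
From mathcomp Require Import all_boot all_order all_algebra.
From mathcomp Require Import boolp classical_sets reals ereal exp.
From mathcomp Require Import complex mxtens.

Set Implicit Arguments.
Unset Strict Implicit.
Unset Printing Implicit Defensive.

Import Order.TTheory GRing.Theory Num.Theory.
Local Open Scope ring_scope.
Local Open Scope complex_scope.

Section QInfo.
Variable R : realType.
Local Notation C := R[i].

Definition adjmx m n (M : 'M[C]_(m, n)) : 'M[C]_(n, m) := (map_mx (@conjc R) M)^T.

Definition unitarymx n (U : 'M[C]_n) : Prop := U *m adjmx U = 1%:M.

Definition psdmx n (M : 'M[C]_n) : Prop :=
  adjmx M = M /\ forall v : 'cV[C]_n, 0 <= (adjmx v *m M *m v) 0 0.

Definition densitymx n (M : 'M[C]_n) : Prop := psdmx M /\ \tr M = 1.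

Definition psd_decomp n (M : 'M[C]_n) (p : 'M[C]_n * 'rV[R]_n) : Prop :=
  unitarymx p.1 /\ (forall i, 0 <= p.2 0 i) /\
  M = p.1 *m diag_mx (map_mx (fun x => x%:C) p.2) *m adjmx p.1.

(* f(M) for PSD M: f applied only to nonzero eigenvalues (zero eigenvalues
   are sent to 0); the result does not depend on the chosen decomposition. *)
Definition mxfun (f : R -> R) n (M : 'M[C]_n) : 'M[C]_n :=
  match pselect (exists p, psd_decomp M p) with
  | left H => let p := projT1 (cid H) in
      p.1 *m diag_mx (map_mx (fun x => (if x == 0 then 0 else f x)%:C) p.2)
          *m adjmx p.1
  | right _ => 0
  end.

(* M^s, with negative powers being generalized inverses *)
Definition mxpow n (M : 'M[C]_n) (s : R) : 'M[C]_n := mxfun (fun x => powR x s) M.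

(* Tensor index of (a,b,e) in H_A (x) H_B (x) H_E, ordered as ((A,B),E). *)
Definition idx3 a b e (i : 'I_a) (j : 'I_b) (k : 'I_e) : 'I_(a * b * e) :=
  mxtens_index (mxtens_index (i, j), k).

Definition ptrE a b e (w : 'M[C]_(a * b * e)) : 'M[C]_(a * b) :=
  \matrix_(x, y) \sum_(k < e) w (mxtens_index (x, k)) (mxtens_index (y, k)).

Definition ptrB_ABE a b e (w : 'M[C]_(a * b * e)) : 'M[C]_(a * e) :=
  \matrix_(x, y) \sum_(j < b)
     w (idx3 (mxtens_unindex x).1 j (mxtens_unindex x).2)
       (idx3 (mxtens_unindex y).1 j (mxtens_unindex y).2).

Definition ptrAB_ABE a b e (w : 'M[C]_(a * b * e)) : 'M[C]_e :=
  \matrix_(k, k') \sum_(x < a * b) w (mxtens_index (x, k)) (mxtens_index (x, k')).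

Definition ptrA_ABE a b e (w : 'M[C]_(a * b * e)) : 'M[C]_(b * e) :=
  \matrix_(x, y) \sum_(i < a)
     w (idx3 i (mxtens_unindex x).1 (mxtens_unindex x).2)
       (idx3 i (mxtens_unindex y).1 (mxtens_unindex y).2).

(* M_{AE} (x) 1_B as an operator on ABE *)
Definition extAE_ABE a b e (M : 'M[C]_(a * e)) : 'M[C]_(a * b * e) :=
  \matrix_(x, y)
    let: (ij, k) := mxtens_unindex x in let: (i, j) := mxtens_unindex ij in
    let: (ij', k') := mxtens_unindex y in let: (i', j') := mxtens_unindex ij' in
    (j == j')%:R * M (mxtens_index (i, k)) (mxtens_index (i', k')).

Definition extE_BE b e (M : 'M[C]_e) : 'M[C]_(b * e) :=
  \matrix_(x, y)
    let: (j, k) := mxtens_unindex x in let: (j', k') := mxtens_unindex y in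
    (j == j')%:R * M k k'.

Definition renyiCMI (alpha : R) a b e (w : 'M[C]_(a * b * e)) : R :=
  let wAE := ptrB_ABE w in
  let wE := ptrAB_ABE w in
  let sAE := extAE_ABE b (mxpow wAE ((1 - alpha) / 2)) in
  let inner := ptrA_ABE (sAE *m mxpow w alpha *m sAE) in
  let sE := extE_BE b (mxpow wE ((alpha - 1) / 2)) in
  alpha / (alpha - 1) * ln (complex.Re (\tr (mxpow (sE *m inner *m sE) (alpha^-1)))).

Definition renyi_sq_ent (alpha : R) a b (rho : 'M[C]_(a * b)) : \bar R :=
  ((2^-1)%:E * ereal_inf [set x : \bar R | exists (e : nat) (w : 'M[C]_(a * b * e)),
      densitymx w /\ ptrE w = rho /\ x = (renyiCMI alpha w)%:E])%E.

Definition kronv a b (u : 'cV[C]_a) (v : 'cV[C]_b) : 'cV[C]_(a * b) :=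
  \col_x (u (mxtens_unindex x).1 0 * v (mxtens_unindex x).2 0).

Definition orthonormal_vecs a d (f : 'I_d -> 'cV[C]_a) : Prop :=
  forall i j, adjmx (f i) *m f j = ((i == j)%:R)%:M.

Definition max_ent_vec a b d (fa : 'I_d -> 'cV[C]_a) (fb : 'I_d -> 'cV[C]_b)
  : 'cV[C]_(a * b) :=
  ((Num.sqrt (d%:R : R))^-1)%:C *: \sum_(i < d) kronv (fa i) (fb i).

End QInfo.

(* Main.v *)
Require Import Defs.
From HB Require Import structures.
From mathcomp Require Import all_boot all_order all_algebra.
From mathcomp Require Import boolp classical_sets reals ereal exp.
From mathcomp Require Import complex mxtens.
Set Warnings "-notation-overridden".
From mathcomp Require Import ring lra.
Import Order.TTheory GRing.Theory Num.Theory.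
Local Open Scope ring_scope.

Module Helpers.
Set Implicit Arguments.
Unset Strict Implicit.
Unset Printing Implicit Defensive.
Import Order.TTheory GRing.Theory Num.Theory.
Local Open Scope ring_scope.
Local Open Scope complex_scope.

Section A.
Variable R : realType.
Local Notation C := R[i].

Lemma adjmxE m n (M : 'M[C]_(m,n)) i j : adjmx M i j = (M j i)^*.
Proof. by rewrite /adjmx !mxE. Qed.

Lemma adjmxK m n (M : 'M[C]_(m,n)) : adjmx (adjmx M) = M.
Proof. by apply/matrixP=> i j; rewrite !adjmxE conjcK. Qed.

Lemma adjmxM m n p (A : 'M[C]_(m,n)) (B : 'M[C]_(n,p)) :
  adjmx (A *m B) = adjmx B *m adjmx A.
Proof.
apply/matrixP=> i j; rewrite !mxE rmorph_sum; apply: eq_bigr => k _.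
by rewrite !adjmxE rmorphM mulrC.
Qed.

Lemma adjmxD m n (A B : 'M[C]_(m,n)) : adjmx (A + B) = adjmx A + adjmx B.
Proof. by apply/matrixP=> i j; rewrite !mxE rmorphD. Qed.

Lemma adjmxZ m n c (A : 'M[C]_(m,n)) : adjmx (c *: A) = c^* *: adjmx A.
Proof. by apply/matrixP=> i j; rewrite !mxE rmorphM. Qed.

Lemma adjmx_sum m n I (r : seq I) (P : pred I) (F : I -> 'M[C]_(m,n)) :
  adjmx (\sum_(i <- r | P i) F i) = \sum_(i <- r | P i) adjmx (F i).
Proof.
elim/big_rec2: _ => [|i x y _ <-]; last by rewrite adjmxD.
by apply/matrixP=> i j; rewrite !mxE rmorph0.
Qed.

Lemma adjmx1 n : adjmx (1%:M : 'M[C]_n) = 1%:M.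
Proof. by apply/matrixP=> i j; rewrite !mxE eq_sym; case: eqP; rewrite ?rmorph0 ?rmorph1. Qed.

Lemma adjmx_tens m n p q (A : 'M[C]_(m,n)) (B : 'M[C]_(p,q)) :
  adjmx (A *t B) = adjmx A *t adjmx B.
Proof. by apply/matrixP=> i j; rewrite !mxE rmorphM. Qed.

Definition Dg n (G : R -> R) (l : 'rV[R]_n) : 'M[C]_n :=
  diag_mx (map_mx (fun x => (G x)%:C) l).

Lemma DgE n G (l : 'rV[R]_n) i j : Dg G l i j = ((G (l 0 i))%:C) *+ (i == j).
Proof. by rewrite /Dg !mxE. Qed.

Lemma conjc_real (x : R) : (x%:C)^* = x%:C.
Proof. by rewrite /= oppr0. Qed.

Lemma adj_Dg n G (l : 'rV[R]_n) : adjmx (Dg G l) = Dg G l.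
Proof.
apply/matrixP=> i j; rewrite adjmxE !DgE eq_sym.
by case: eqP => [->|_]; rewrite ?conjc_real ?mulr0n ?rmorph0.
Qed.

Lemma Dg_mul n G1 G2 (l : 'rV[R]_n) :
  Dg G1 l *m Dg G2 l = Dg (fun x => G1 x * G2 x) l.
Proof.
rewrite /Dg mul_diag_mx; apply/matrixP=> i j; rewrite !mxE.
by case: eqP => _; rewrite ?mulr1n ?mulr0n ?mulr0 //= -rmorphM.
Qed.

Lemma unitary_adjL n (U : 'M[C]_n) : Defs.unitarymx U -> adjmx U *m U = 1%:M.
Proof. by move=> hU; apply: mulmx1C. Qed.

End A.

Set Implicit Arguments.
Unset Strict Implicit.
Unset Printing Implicit Defensive.
Import Order.TTheory GRing.Theory Num.Theory.
Local Open Scope ring_scope.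
Local Open Scope complex_scope.

Section B.
Variable R : realType.
Local Notation C := R[i].

Lemma c_ge0E (x : C) : 0 <= x -> x = (complex.Re x)%:C /\ 0 <= complex.Re x.
Proof.
by case: x => xr xi; rewrite lecE /= => /andP[/eqP -> ->]; split.
Qed.

Lemma quad_Dg n (l : 'rV[R]_n) (w : 'cV[C]_n) :
  (adjmx w *m Dg id l *m w) 0 0 = \sum_i (l 0 i)%:C * (w i 0 * (w i 0)^*).
Proof.
rewrite /Dg mul_mx_diag !mxE; apply: eq_bigr => i _; rewrite !mxE.
by ring.
Qed.

Lemma decomp_psd n (M : 'M[C]_n) p : psd_decomp M p -> psdmx M.
Proof.
case: p => U l [/= hU [hl ->]]; split.
  by rewrite !adjmxM adjmxK [adjmx (diag_mx _)](adj_Dg id) mulmxA.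
move=> v; rewrite -!mulmxA mulmxA -[adjmx v *m U]adjmxK adjmxM adjmxK.
rewrite mulmxA (quad_Dg l (adjmx U *m v)).
apply: sumr_ge0 => i _; apply: mulr_ge0; first by rewrite lecR.
exact: mul_conjC_ge0.
Qed.

Lemma decomp_uniq G n (M : 'M[C]_n) p q : psd_decomp M p -> psd_decomp M q ->
  p.1 *m Dg G p.2 *m adjmx p.1 = q.1 *m Dg G q.2 *m adjmx q.1.
Proof.
case: p => U l [/= hU [hl hM]]; case: q => V m [/= hV [hm hM']].
have hU' := unitary_adjL hU; have hV' := unitary_adjL hV.
set W := adjmx V *m U.
have VW : V *m W = U by rewrite /W mulmxA hV mul1mx.
have WU : W *m adjmx U = adjmx V by rewrite /W -mulmxA hU mulmx1.
have eqW : W *m Dg id l = Dg id m *m W.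
  have : adjmx V *m M *m U = adjmx V *m M *m U by [].
  rewrite {1}hM {1}hM' !mulmxA hV' mul1mx -!mulmxA hU' mulmx1 -/W.
  by rewrite !mulmxA.
clearbody W.
have eqG : W *m Dg G l = Dg G m *m W.
  apply/matrixP=> i j; move/matrixP: eqW => /(_ i j).
  rewrite /Dg !mul_mx_diag !mul_diag_mx !mxE.
  have [->|nz] := eqVneq (W i j) 0; first by move=> _; rewrite mulr0 mul0r.
  move=> /eqP; rewrite mulrC -subr_eq0 -mulrBl mulf_eq0 (negPf nz) orbF.
  by rewrite subr_eq0 => /eqP/(congr1 (@complex.Re R)) /= ->; rewrite mulrC.
by rewrite -{1}VW -(mulmxA V W) eqG mulmxA -(mulmxA _ W) WU.
Qed.

Definition gz (f : R -> R) := fun x : R => if x == 0 then 0 else f x.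

Lemma mxfun_decomp f n (M : 'M[C]_n) p : psd_decomp M p ->
  mxfun f M = p.1 *m Dg (gz f) p.2 *m adjmx p.1.
Proof.
move=> hp; rewrite /mxfun; case: pselect => [H|[]]; last by exists p.
exact: (decomp_uniq (gz f) (projT2 (cid H)) hp).
Qed.

End B.

Set Implicit Arguments.
Unset Strict Implicit.
Unset Printing Implicit Defensive.
Import Order.TTheory GRing.Theory Num.Theory.
Local Open Scope ring_scope.
Local Open Scope complex_scope.

Section Cs.
Variable R : realType.
Local Notation C := R[i].

Lemma tstarE m n (A : 'M[C]_(m,n)) : (A ^t* )%sesqui = adjmx A.
Proof. by rewrite /adjmx map_trmx. Qed.

Lemma psd_decomp_ex n (M : 'M[C]_n) : psdmx M -> exists p, psd_decomp M p.
Proof.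
move=> [hH hq].
have nM : M \is normalmx by apply/eqP; rewrite !tstarE hH.
have := orthomx_spectralP nM.
set S := spectralmx M; set sp := spectral_diag M => hM.
have hS : S *m adjmx S = 1%:M by rewrite -tstarE; apply/unitarymxP/spectral_unitarymx.
have hS' : adjmx S *m S = 1%:M by apply: mulmx1C.
rewrite invmx_unitary ?spectral_unitarymx // tstarE in hM.
have spE i : sp 0 i = (adjmx (adjmx S *m (delta_mx i 0 : 'cV[C]_n)) *m M *m (adjmx S *m (delta_mx i 0 : 'cV[C]_n))) 0 0.
  rewrite hM adjmxM adjmxK !mulmxA -(mulmxA _ S (adjmx S)) hS mulmx1 -(mulmxA _ S (adjmx S)) hS mulmx1.
  rewrite mul_mx_diag !mxE (bigD1 i) //= big1; last first.
    by move=> j /negPf nj; rewrite !mxE nj /= mulr0.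
  rewrite !mxE !eqxx /= rmorph1 mulr1 addr0 (_ : (1 -i* 0) = 1) ?mul1r // oppr0 //.
have sp_ge0 i : 0 <= sp 0 i by rewrite spE; apply: hq.
exists (adjmx S, \row_i complex.Re (sp 0 i)); split => /=.
  by rewrite /Defs.unitarymx adjmxK.
split; first by move=> i; rewrite mxE; case: (c_ge0E (sp_ge0 i)).
rewrite adjmxK {1}hM; congr (_ *m diag_mx _ *m _).
by apply/matrixP=> i j; rewrite ord1 !mxE; case: (c_ge0E (sp_ge0 j)).
Qed.

End Cs.

Set Implicit Arguments.
Unset Strict Implicit.
Unset Printing Implicit Defensive.
Import Order.TTheory GRing.Theory Num.Theory.
Local Open Scope ring_scope.
Local Open Scope complex_scope.

Lemma sum_tens (V : nmodType) m n (F : 'I_(m * n) -> V) :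
  \sum_(x < m * n) F x = \sum_(i < m) \sum_(j < n) F (mxtens_index (i, j)).
Proof.
rewrite pair_big /=; apply: reindex => /=.
by exists (@mxtens_unindex m n) => x _; rewrite (mxtens_indexK, mxtens_unindexK) //; case: x.
Qed.

Lemma tens_index_eq m n (i i' : 'I_m) (j j' : 'I_n) :
  (mxtens_index (i, j) == mxtens_index (i', j')) = (i == i') && (j == j').
Proof.
apply/eqP/andP => [/(congr1 (@mxtens_unindex m n))|[/eqP-> /eqP->]] //.
by rewrite !mxtens_indexK => -[-> ->].
Qed.

Section Ds.
Variable R : realType.
Local Notation C := R[i].

Lemma tensP m n p q (A B : 'M[C]_(m * n, p * q)) :
  (forall i j k l, A (mxtens_index (i, j)) (mxtens_index (k, l)) =
                   B (mxtens_index (i, j)) (mxtens_index (k, l))) -> A = B.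
Proof.
move=> h; apply/matrixP => x y.
by case: (mxtens_indexP x) => i j; case: (mxtens_indexP y) => k l.
Qed.

Lemma tens11 m n : (1%:M : 'M[C]_m) *t (1%:M : 'M[C]_n) = 1%:M.
Proof.
apply: tensP => i j k l; rewrite tensmxE !mxE tens_index_eq.
by case: (i == k); case: (j == l); rewrite ?mulr1 ?mulr0.
Qed.

Lemma unitary_tens m n (U : 'M[C]_m) (V : 'M[C]_n) :
  Defs.unitarymx U -> Defs.unitarymx V -> Defs.unitarymx (U *t V).
Proof.
by move=> hU hV; rewrite /Defs.unitarymx adjmx_tens tensmx_mul hU hV tens11.
Qed.

Definition rtens m n (l : 'rV[R]_m) (s : 'rV[R]_n) : 'rV[R]_(m * n) :=
  \row_x (l 0 (mxtens_unindex x).1 * s 0 (mxtens_unindex x).2).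

Lemma Dg_tens m n G1 G2 (l : 'rV[R]_m) (s : 'rV[R]_n) (G : R -> R) :
  (forall i j, G (l 0 i * s 0 j) = G1 (l 0 i) * G2 (s 0 j)) ->
  Dg G (rtens l s) = Dg G1 l *t Dg G2 s.
Proof.
move=> hG; apply: tensP => i j k l'; rewrite tensmxE !DgE tens_index_eq !mxE.
rewrite mxtens_indexK /= hG.
by case: (i == k); case: (j == l'); rewrite ?mulr1n ?mulr0n ?mulr0 ?mul0r // rmorphM.
Qed.

Lemma decomp_tens m n (A : 'M[C]_m) (B : 'M[C]_n) U l V s :
  psd_decomp A (U, l) -> psd_decomp B (V, s) ->
  psd_decomp (A *t B) (U *t V, rtens l s).
Proof.
move=> [/= hU [hl hA]] [/= hV [hs hB]]; split => /=; first exact: unitary_tens.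
split; first by move=> x; rewrite mxE; apply: mulr_ge0.
have := @Dg_tens m n id id l s id (fun _ _ => erefl).
rewrite /Dg => ->.
by rewrite hA hB adjmx_tens !tensmx_mul.
Qed.

Lemma proj_spec n (P : 'M[C]_n) W p :
  psd_decomp P (W, p) -> P *m P = P -> forall i, p 0 i = 0 \/ p 0 i = 1.
Proof.
move=> [/= hW [hp hP]] hPP i.
have hW' := unitary_adjL hW.
have : adjmx W *m (P *m P) *m W = adjmx W *m P *m W by rewrite hPP.
rewrite hP !mulmxA hW' mul1mx -!(mulmxA _ (adjmx W) W) !hW' !mulmx1.

move/matrixP => /(_ i i); rewrite mul_mx_diag !mxE eqxx mulr1n.
move=> /(congr1 (@complex.Re R)) /=.
rewrite mulr0 subr0 => h; have : p 0 i * (p 0 i - 1) = 0 by rewrite mulrBr mulr1 h subrr.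
by move/eqP; rewrite mulf_eq0 subr_eq0 => /orP[/eqP|/eqP]; [left|right].
Qed.

End Ds.

Set Implicit Arguments.
Unset Strict Implicit.
Unset Printing Implicit Defensive.
Import Order.TTheory GRing.Theory Num.Theory.
Local Open Scope ring_scope.
Local Open Scope complex_scope.

Section Es.
Variable R : realType.
Local Notation C := R[i].

Lemma DgZ n (k : R) (l : 'rV[R]_n) : Dg id (k *: l) = k%:C *: Dg id l.
Proof.
apply/matrixP=> i j; rewrite !mxE.
by case: (i == j); rewrite ?mulr1n ?mulr0n ?mulr0 //= rmorphM.
Qed.

Lemma decompZ n (P : 'M[C]_n) W p k : 0 < k -> psd_decomp P (W, p) ->
  psd_decomp (k%:C *: P) (W, k *: p).
Proof.
move=> hk [/= hW [hp hP]]; split => //=; split.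
  by move=> i; rewrite mxE; apply: mulr_ge0 => //; apply: ltW.
by have := DgZ k p; rewrite /Dg => ->; rewrite hP scalemxAl scalemxAr.
Qed.

Lemma mxfun_projtens f m n (P : 'M[C]_m) (T : 'M[C]_n) k W p V t :
  psd_decomp P (W, p) -> P *m P = P -> psd_decomp T (V, t) -> 0 < k ->
  mxfun f ((k%:C *: P) *t T) =
  P *t (V *m Dg (gz (fun x => f (k * x))) t *m adjmx V).
Proof.
move=> hP hPP hT hk.
have hp := proj_spec hP hPP.
have hD := decomp_tens (decompZ hk hP) hT.
rewrite (mxfun_decomp f hD) /=.
have kn0 : k != 0 by rewrite gt_eqF.
rewrite (@Dg_tens _ _ _ (fun x => x / k) (gz (fun x => f (k * x)))); last first.
  move=> i j; rewrite mxE [k * p 0 i / k]mulrAC mulfV // mul1r.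
  case: (hp i) => ->; first by rewrite mulr0 mul0r mul0r /gz eqxx.
  by rewrite !mulr1 mul1r /gz mulf_eq0 (negPf kn0).
have -> : Dg (fun x => x / k) (k *: p) = Dg id p.
  apply/matrixP=> i j; rewrite !mxE [k * p 0 i / k]mulrAC mulfV // mul1r.
  by [].
case: hP => /= _ [_ ->]; rewrite adjmx_tens !tensmx_mul. by [].
Qed.

End Es.

Set Implicit Arguments.
Unset Strict Implicit.
Unset Printing Implicit Defensive.
Import Order.TTheory GRing.Theory Num.Theory.
Local Open Scope ring_scope.
Local Open Scope complex_scope.

Section Fs.
Variable R : realType.
Local Notation C := R[i].

Definition ptrB a b (M : 'M[C]_(a * b)) : 'M[C]_a :=
  \matrix_(i, i') \sum_(j < b) M (mxtens_index (i, j)) (mxtens_index (i', j)).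
Definition ptrA a b (M : 'M[C]_(a * b)) : 'M[C]_b :=
  \matrix_(j, j') \sum_(i < a) M (mxtens_index (i, j)) (mxtens_index (i, j')).

Lemma ptrB_tens a b e (M : 'M[C]_(a * b)) (S : 'M[C]_e) :
  ptrB_ABE (M *t S) = ptrB M *t S.
Proof.
apply: tensP => i k i' k'; rewrite /ptrB_ABE tensmxE !mxE !mxtens_indexK /=.
by rewrite mulr_suml; apply: eq_bigr => j _; rewrite /idx3 tensmxE.
Qed.

Lemma ptrA_tens a b e (M : 'M[C]_(a * b)) (S : 'M[C]_e) :
  ptrA_ABE (M *t S) = ptrA M *t S.
Proof.
apply: tensP => j k j' k'; rewrite /ptrA_ABE tensmxE !mxE !mxtens_indexK /=.
by rewrite mulr_suml; apply: eq_bigr => i _; rewrite /idx3 tensmxE.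
Qed.

Lemma ptrAB_tens a b e (M : 'M[C]_(a * b)) (S : 'M[C]_e) :
  ptrAB_ABE (M *t S) = \tr M *: S.
Proof.
apply/matrixP => k k'; rewrite /ptrAB_ABE !mxE /mxtrace mulr_suml.
by apply: eq_bigr => x _; rewrite tensmxE.
Qed.

Lemma ptrE_tens a b (M : 'M[C]_(a * b)) (S : 'M[C]_1) :
  ptrE (M *t S) = S 0 0 *: M.
Proof.
apply/matrixP => x y; rewrite /ptrE !mxE big_ord1 tensmxE mulrC.
by rewrite !ord1.
Qed.

Lemma extAE_tens a b e (M : 'M[C]_a) (S : 'M[C]_e) :
  extAE_ABE b (M *t S) = (M *t 1%:M) *t S.
Proof.
apply: tensP => x k y k'.
case: (mxtens_indexP x) => i j; case: (mxtens_indexP y) => i' j'.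
rewrite /extAE_ABE !tensmxE !mxE !mxtens_indexK /= !tensmxE.
by rewrite mulrCA mulrA.
Qed.

Lemma extE_tens b e (S : 'M[C]_e) : extE_BE b S = 1%:M *t S.
Proof.
apply: tensP => j k j' k'.
by rewrite /extE_BE !tensmxE !mxE !mxtens_indexK /=.
Qed.

Lemma extAE_scale a b e c (M : 'M[C]_(a * e)) :
  extAE_ABE b (c *: M) = c *: extAE_ABE b M.
Proof.
apply/matrixP => x y; rewrite /extAE_ABE !mxE.
case: (mxtens_unindex x) => ij k; case: (mxtens_unindex y) => ij' k'.
case: (mxtens_unindex ij) => i j; case: (mxtens_unindex ij') => i' j'.
by rewrite !mxE mulrCA.
Qed.

Lemma tensZl m n p q c (A : 'M[C]_(m,n)) (B : 'M[C]_(p,q)) :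
  (c *: A) *t B = c *: (A *t B).
Proof. by apply/matrixP=> x y; rewrite !mxE mulrA. Qed.

Lemma tensZr m n p q c (A : 'M[C]_(m,n)) (B : 'M[C]_(p,q)) :
  A *t (c *: B) = c *: (A *t B).
Proof. by apply/matrixP=> x y; rewrite !mxE mulrCA. Qed.

Lemma trace_tens m n (A : 'M[C]_m) (B : 'M[C]_n) : \tr (A *t B) = \tr A * \tr B.
Proof.
rewrite /mxtrace sum_tens mulr_suml; apply: eq_bigr => i _.
by rewrite mulr_sumr; apply: eq_bigr => j _; rewrite tensmxE.
Qed.

Lemma kronv_mul m n p q (A : 'M[C]_(m,n)) (B : 'M[C]_(p,q)) u v :
  (A *t B) *m kronv u v = kronv (A *m u) (B *m v).
Proof.
apply/matrixP => x z; rewrite ord1; case: (mxtens_indexP x) => i j.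
rewrite !mxE mxtens_indexK /= sum_tens mulr_suml; apply: eq_bigr => k _.
rewrite mulr_sumr; apply: eq_bigr => l _.
by rewrite tensmxE !mxE mxtens_indexK /=; ring.
Qed.

Lemma kronv_dot m n (u u' : 'cV[C]_m) (v v' : 'cV[C]_n) :
  (adjmx (kronv u v) *m kronv u' v') 0 0 =
  (adjmx u *m u') 0 0 * (adjmx v *m v') 0 0.
Proof.
rewrite !mxE sum_tens mulr_suml; apply: eq_bigr => i _.
rewrite mulr_sumr; apply: eq_bigr => j _.
by rewrite !mxE mxtens_indexK /= rmorphM; ring.
Qed.

End Fs.

Set Implicit Arguments.
Unset Strict Implicit.
Unset Printing Implicit Defensive.
Import Order.TTheory GRing.Theory Num.Theory.
Local Open Scope ring_scope.
Local Open Scope complex_scope.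

Section Gs.
Variable R : realType.
Local Notation C := R[i].

Lemma psd_kernel n (M : 'M[C]_n) (v : 'cV[C]_n) : psdmx M ->
  (adjmx v *m M *m v) 0 0 = 0 -> M *m v = 0.
Proof.
move=> /psd_decomp_ex [[U l] [/= hU [hl hM]]].
have hD : diag_mx (map_mx (fun x => x%:C) l) = Dg id l by [].
rewrite hM hD => h0.
have : (adjmx (adjmx U *m v) *m Dg id l *m (adjmx U *m v)) 0 0 = 0.
  by rewrite adjmxM adjmxK !mulmxA -h0 !mulmxA.
rewrite quad_Dg => h1.
have hlC i : 0 <= (l 0 i)%:C by rewrite lecR.
have h2 := psumr_eq0P (P := predT) (fun i _ => mulr_ge0 (hlC i) (mul_conjC_ge0 _)) h1.
have -> : U *m Dg id l *m adjmx U *m v = U *m (Dg id l *m (adjmx U *m v)).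
  by rewrite !mulmxA.
suff -> : Dg id l *m (adjmx U *m v) = 0 by rewrite mulmx0.
move: h2; set y := adjmx U *m v; clearbody y => h2.
apply/matrixP => i j; rewrite ord1 /Dg mul_diag_mx [in RHS]mxE !mxE.
have /eqP := h2 i isT; rewrite mulf_eq0 mul_conjC_eq0 => /orP[/eqP -> | /eqP ->].
  by rewrite mul0r.
by rewrite mulr0.
Qed.

Lemma sum_kronvR m n (F : 'I_(m * n) -> C) (u : 'cV[C]_m) (k : 'I_n) :
  \sum_z F z * kronv u (delta_mx k 0) z 0 = \sum_x F (mxtens_index (x, k)) * u x 0.
Proof.
rewrite sum_tens; apply: eq_bigr => x _.
rewrite (bigD1 k) //= big1 => [|j /negPf nj]; rewrite !mxE mxtens_indexK /=.
  by rewrite eqxx mulr1 addr0.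
by rewrite nj mulr0 mulr0.
Qed.

Lemma sum_kronvL m n (F : 'I_(m * n) -> C) (u : 'cV[C]_m) (k : 'I_n) :
  \sum_z adjmx (kronv u (delta_mx k 0)) 0 z * F z = \sum_x (u x 0)^* * F (mxtens_index (x, k)).
Proof.
rewrite sum_tens; apply: eq_bigr => x _.
rewrite (bigD1 k) //= big1 => [|j /negPf nj]; rewrite !mxE mxtens_indexK /=.
  by rewrite eqxx mulr1 addr0.
by rewrite nj mulr0 rmorph0 mul0r.
Qed.

Lemma quad_kronv m n (M : 'M[C]_(m * n)) (u : 'cV[C]_m) (k : 'I_n) :
  (adjmx (kronv u (delta_mx k 0)) *m M *m kronv u (delta_mx k 0)) 0 0 =
  \sum_y (\sum_x (u x 0)^* * M (mxtens_index (x, k)) (mxtens_index (y, k))) * u y 0.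
Proof.
rewrite mxE (sum_kronvR (fun z => (adjmx (kronv u (delta_mx k 0)) *m M) 0 z)).
by apply: eq_bigr => y _; rewrite mxE sum_kronvL.
Qed.

Lemma kronv_deltaE m n (x : 'I_m) (k : 'I_n) :
  kronv (delta_mx x 0 : 'cV[C]_m) (delta_mx k 0 : 'cV[C]_n) = delta_mx (mxtens_index (x, k)) 0.
Proof.
apply/matrixP => z t; rewrite ord1; case: (mxtens_indexP z) => i j.
rewrite !mxE mxtens_indexK /= tens_index_eq.
by case: (i == x); case: (j == k); rewrite ?mulr1 ?mulr0 ?mul0r.
Qed.

Lemma entry_delta n (M : 'M[C]_n) z z' :
  (adjmx (delta_mx z 0 : 'cV[C]_n) *m M *m (delta_mx z' 0 : 'cV[C]_n)) 0 0 = M z z'.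
Proof.
rewrite -colE mxE mxE (bigD1 z) //= big1 => [|t /negPf nt].
  by rewrite adjmxE !mxE !eqxx andbT rmorph1 mul1r addr0.
by rewrite adjmxE !mxE nt andFb rmorph0 mul0r.
Qed.

Lemma kronvBl m n (u v : 'cV[C]_m) (t : 'cV[C]_n) c :
  kronv (u - c *: v) t = kronv u t - c *: kronv v t.
Proof. by apply/matrixP => z j; rewrite !mxE mulrBl mulrA. Qed.

Definition sigE a b e (phi : 'cV[C]_(a * b)) (w : 'M[C]_(a * b * e)) : 'M[C]_e :=
  \matrix_(k, k') (adjmx (kronv phi (delta_mx k 0)) *m w *m kronv phi (delta_mx k' 0)) 0 0.

Lemma pure_kill a b e (phi : 'cV[C]_(a * b)) (w : 'M[C]_(a * b * e)) u k :
  psdmx w -> ptrE w = phi *m adjmx phi -> adjmx phi *m u = 0 ->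
  w *m kronv u (delta_mx k 0) = 0.
Proof.
move=> hw hptr hu.
pose q k := (adjmx (kronv u (delta_mx k 0 : 'cV[C]_e)) *m w *m kronv u (delta_mx k 0)) 0 0.
have hs : \sum_k q k = (adjmx u *m ptrE w *m u) 0 0.
  rewrite /q; under eq_bigr do rewrite quad_kronv.
  rewrite exchange_big mxE; apply: eq_bigr => y _.
  rewrite -mulr_suml exchange_big mxE; congr (_ * _); apply: eq_bigr => x _.
  by rewrite /ptrE !mxE mulr_sumr.
have h0 : (adjmx u *m ptrE w *m u) 0 0 = 0.
  rewrite hptr mulmxA -[adjmx u *m phi]adjmxK adjmxM adjmxK hu.
  have -> : adjmx (0 : 'M[C]_(1,1)) = 0 by apply/matrixP => i j; rewrite !mxE rmorph0.
  by rewrite !mul0mx mxE.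
rewrite h0 in hs.
have hq k0 : q k0 = 0.
  by apply: (psumr_eq0P (P := predT) _ hs) => // i _; rewrite /q; case: hw => _ ->.
by apply: psd_kernel => //; apply: hq.
Qed.

Lemma pure_ext a b e (phi : 'cV[C]_(a * b)) (w : 'M[C]_(a * b * e)) :
  adjmx phi *m phi = 1%:M -> psdmx w -> ptrE w = phi *m adjmx phi ->
  w = (phi *m adjmx phi) *t sigE phi w.
Proof.
move=> hphi hw hptr.
have col y k : w *m kronv (delta_mx y 0) (delta_mx k 0) =
    (phi y 0)^* *: (w *m kronv phi (delta_mx k 0 : 'cV[C]_e)).
  have hu : adjmx phi *m (delta_mx y 0 - (phi y 0)^* *: phi) = 0.
    rewrite mulmxBr -scalemxAr hphi; apply/matrixP => i j.
    rewrite !ord1 -colE !mxE eqxx mulr1n mulr1.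
    exact: subrr.
  have := pure_kill k hw hptr hu.
  by rewrite kronvBl mulmxBr -scalemxAr => /eqP; rewrite subr_eq0 => /eqP.
apply: tensP => x k' y k.
rewrite -entry_delta -!kronv_deltaE -mulmxA col.
have hH : adjmx w = w by case: hw.
rewrite -scalemxAr mxE mulmxA.
have -> : adjmx (kronv (delta_mx x 0) (delta_mx k' 0)) *m w =
    phi x 0 *: (adjmx (kronv phi (delta_mx k' 0 : 'cV[C]_e)) *m w).
  by rewrite -{1}hH -adjmxM col adjmxZ conjCK adjmxM hH.
rewrite -!scalemxAl mxE tensmxE.
rewrite [sigE _ _ _ _]mxE [(phi *m _) x y]mxE big_ord1 adjmxE.
rewrite mulrA [_^* * _]mulrC; by [].
Qed.

End Gs.

Set Implicit Arguments.
Unset Strict Implicit.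
Unset Printing Implicit Defensive.
Import Order.TTheory GRing.Theory Num.Theory.
Local Open Scope ring_scope.
Local Open Scope complex_scope.

Section Hs.
Variable R : realType.
Local Notation C := R[i].

Lemma psd_gram n (v : 'cV[C]_n) : psdmx (v *m adjmx v).
Proof.
split; first by rewrite adjmxM adjmxK.
move=> u; have -> : adjmx u *m (v *m adjmx v) *m u = (adjmx u *m v) *m adjmx (adjmx u *m v) by rewrite adjmxM adjmxK !mulmxA.
rewrite mxE big_ord1 adjmxE; exact: mul_conjC_ge0.
Qed.

Lemma psd0 n : psdmx (0 : 'M[C]_n).
Proof.
split; first by apply/matrixP=> i j; rewrite !mxE rmorph0.
by move=> v; rewrite mulmx0 mul0mx mxE.
Qed.

Lemma psdD n (A B : 'M[C]_n) : psdmx A -> psdmx B -> psdmx (A + B).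
Proof.
move=> [hA qA] [hB qB]; split; first by rewrite adjmxD hA hB.
by move=> v; rewrite mulmxDr mulmxDl mxE addr_ge0.
Qed.

Lemma psd_sum n I (r : seq I) (F : I -> 'M[C]_n) :
  (forall i, psdmx (F i)) -> psdmx (\sum_(i <- r) F i).
Proof. by move=> hF; elim/big_ind: _ => //; [exact: psd0 | exact: psdD]. Qed.

Definition ptrB_lin a b (A B : 'M[C]_(a * b)) c :
  ptrB (c *: A + B) = c *: ptrB A + ptrB B.
Proof.
apply/matrixP => i j; rewrite !mxE mulr_sumr -big_split /=.
by apply: eq_bigr => k _; rewrite !mxE.
Qed.

Definition ptrA_lin a b (A B : 'M[C]_(a * b)) c :
  ptrA (c *: A + B) = c *: ptrA A + ptrA B.
Proof.
apply/matrixP => i j; rewrite !mxE mulr_sumr -big_split /=.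
by apply: eq_bigr => k _; rewrite !mxE.
Qed.

Lemma ptrB0 a b : ptrB (0 : 'M[C]_(a * b)) = 0.
Proof. by apply/matrixP => i j; rewrite !mxE big1 // => k _; rewrite mxE. Qed.
Lemma ptrA0 a b : ptrA (0 : 'M[C]_(a * b)) = 0.
Proof. by apply/matrixP => i j; rewrite !mxE big1 // => k _; rewrite mxE. Qed.

Lemma ptrB_sum a b I (r : seq I) (F : I -> 'M[C]_(a * b)) :
  ptrB (\sum_(i <- r) F i) = \sum_(i <- r) ptrB (F i).
Proof.
elim/big_rec2: _ => [|i x y _ <-]; first exact: ptrB0.
by have := ptrB_lin (F i) y 1; rewrite !scale1r.
Qed.
Lemma ptrA_sum a b I (r : seq I) (F : I -> 'M[C]_(a * b)) :
  ptrA (\sum_(i <- r) F i) = \sum_(i <- r) ptrA (F i).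
Proof.
elim/big_rec2: _ => [|i x y _ <-]; first exact: ptrA0.
by have := ptrA_lin (F i) y 1; rewrite !scale1r.
Qed.
Lemma ptrB_scale a b c (A : 'M[C]_(a * b)) : ptrB (c *: A) = c *: ptrB A.
Proof. by rewrite -[c *: A]addr0 ptrB_lin ptrB0 addr0. Qed.
Lemma ptrA_scale a b c (A : 'M[C]_(a * b)) : ptrA (c *: A) = c *: ptrA A.
Proof. by rewrite -[c *: A]addr0 ptrA_lin ptrA0 addr0. Qed.

Lemma ptrB_kron a b (u u' : 'cV[C]_a) (v v' : 'cV[C]_b) :
  ptrB (kronv u v *m adjmx (kronv u' v')) = (adjmx v' *m v) 0 0 *: (u *m adjmx u').
Proof.
apply/matrixP => i j; rewrite !mxE mulr_suml; apply: eq_bigr => k _.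
by rewrite !mxE !big_ord1 !mxE !mxtens_indexK /= rmorphM; ring.
Qed.

Lemma ptrA_kron a b (u u' : 'cV[C]_a) (v v' : 'cV[C]_b) :
  ptrA (kronv u v *m adjmx (kronv u' v')) = (adjmx u' *m u) 0 0 *: (v *m adjmx v').
Proof.
apply/matrixP => i j; rewrite !mxE mulr_suml; apply: eq_bigr => k _.
by rewrite !mxE !big_ord1 !mxE !mxtens_indexK /= rmorphM; ring.
Qed.

End Hs.

Set Implicit Arguments.
Unset Strict Implicit.
Unset Printing Implicit Defensive.
Import Order.TTheory GRing.Theory Num.Theory.
Local Open Scope ring_scope.
Local Open Scope complex_scope.

Section Is.
Variable R : realType.
Local Notation C := R[i].

Lemma onE n d (f : 'I_d -> 'cV[C]_n) : orthonormal_vecs f ->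
  forall i j, (adjmx (f i) *m f j) 0 0 = (i == j)%:R.
Proof. by move=> hf i j; rewrite hf mxE eqxx mulr1n. Qed.

Definition Pj n d (f : 'I_d -> 'cV[C]_n) := \sum_i f i *m adjmx (f i).

Lemma Pj_f n d (f : 'I_d -> 'cV[C]_n) j : orthonormal_vecs f -> Pj f *m f j = f j.
Proof.
move=> hf; rewrite /Pj mulmx_suml (bigD1 j) //= big1 => [|i nij].
  by rewrite -mulmxA hf eqxx mul_mx_scalar scale1r addr0.
by rewrite -mulmxA hf (negPf nij) mul_mx_scalar scale0r.
Qed.

Lemma Pj_proj n d (f : 'I_d -> 'cV[C]_n) : orthonormal_vecs f -> Pj f *m Pj f = Pj f.
Proof.
move=> hf; rewrite {1}/Pj mulmx_sumr; apply: eq_bigr => i _.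
by rewrite mulmxA Pj_f.
Qed.

Lemma Pj_psd n d (f : 'I_d -> 'cV[C]_n) : psdmx (Pj f).
Proof. by apply: psd_sum => i; exact: psd_gram. Qed.

Lemma Pj_tr n d (f : 'I_d -> 'cV[C]_n) : orthonormal_vecs f -> \tr (Pj f) = d%:R.
Proof.
move=> hf; rewrite /Pj raddf_sum /= (eq_bigr (fun _ => 1)) ?sumr_const ?card_ord //.
by move=> i _; rewrite mxtrace_mulC hf eqxx mxtrace_scalar.
Qed.

Variables (a b d : nat) (hd : (0 < d)%N).
Variables (fa : 'I_d -> 'cV[C]_a) (fb : 'I_d -> 'cV[C]_b).
Hypotheses (hfa : orthonormal_vecs fa) (hfb : orthonormal_vecs fb).

Let cr : R := (Num.sqrt (d%:R : R))^-1.
Let Phi := \sum_(i < d) kronv (fa i) (fb i).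

Lemma phiE : max_ent_vec fa fb = cr%:C *: Phi.
Proof. by []. Qed.

Lemma crE : (cr%:C)^* * cr%:C = (d%:R^-1 : R)%:C.
Proof.
have e : forall x : R, Num.conj (x%:C : C) = x%:C by move=> x; exact: conjc_real.
rewrite e.
by rewrite -rmorphM /cr -invfM -expr2 sqr_sqrtr // ler0n.
Qed.

Lemma conjCr (x : R) : Num.conj (x%:C : C) = x%:C.
Proof. exact: conjc_real. Qed.

Lemma dC : (d%:R : C) = (d%:R : R)%:C.
Proof. by rewrite rmorph_nat. Qed.

Lemma dn0 : (d%:R : R) != 0.
Proof. by rewrite pnatr_eq0 -lt0n. Qed.

Lemma Phi_norm : (adjmx Phi *m Phi) 0 0 = d%:R.
Proof.
rewrite /Phi adjmx_sum mulmx_suml summxE.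
rewrite (eq_bigr (fun _ => 1)) ?sumr_const ?card_ord // => i _.
rewrite mulmx_sumr summxE (bigD1 i) //= big1 => [|j nij].
  by rewrite kronv_dot !onE // eqxx mulr1 addr0.
by rewrite kronv_dot !onE // eq_sym (negPf nij) mulr0.
Qed.

Lemma phi_norm : adjmx (max_ent_vec fa fb) *m max_ent_vec fa fb = 1%:M.
Proof.
apply/matrixP => i j; rewrite !ord1 phiE adjmxZ -scalemxAl -scalemxAr scalerA.
by rewrite mxE crE Phi_norm mxE eqxx mulr1n dC -rmorphM mulVf ?dn0.
Qed.

Lemma rhoE : max_ent_vec fa fb *m adjmx (max_ent_vec fa fb) =
  (d%:R^-1 : R)%:C *: \sum_i \sum_j kronv (fa i) (fb i) *m adjmx (kronv (fa j) (fb j)).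
Proof.
rewrite phiE adjmxZ -scalemxAl -scalemxAr scalerA mulrC crE; congr (_ *: _).
rewrite /Phi adjmx_sum mulmx_suml; apply: eq_bigr => i _.
by rewrite mulmx_sumr.
Qed.

Lemma rho_ptrB : ptrB (max_ent_vec fa fb *m adjmx (max_ent_vec fa fb)) =
  (d%:R^-1 : R)%:C *: Pj fa.
Proof.
rewrite rhoE ptrB_scale ptrB_sum; congr (_ *: _); apply: eq_bigr => i _.
rewrite ptrB_sum (bigD1 i) //= big1 => [|j nij].
  by rewrite ptrB_kron onE // eqxx scale1r addr0.
by rewrite ptrB_kron onE // (negPf nij) scale0r.
Qed.

Lemma rho_ptrA : ptrA (max_ent_vec fa fb *m adjmx (max_ent_vec fa fb)) =
  (d%:R^-1 : R)%:C *: Pj fb.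
Proof.
rewrite rhoE ptrA_scale ptrA_sum; congr (_ *: _); apply: eq_bigr => i _.
rewrite ptrA_sum (bigD1 i) //= big1 => [|j nij].
  by rewrite ptrA_kron onE // eqxx scale1r addr0.
by rewrite ptrA_kron onE // (negPf nij) scale0r.
Qed.

Lemma PA_phi : (Pj fa *t 1%:M) *m max_ent_vec fa fb = max_ent_vec fa fb.
Proof.
rewrite phiE -scalemxAr /Phi mulmx_sumr; congr (_ *: _); apply: eq_bigr => i _.
by rewrite kronv_mul Pj_f // mul1mx.
Qed.

Lemma rho_proj : let r := max_ent_vec fa fb *m adjmx (max_ent_vec fa fb) in r *m r = r.
Proof.
by rewrite /= mulmxA -(mulmxA _ (adjmx _)) phi_norm mulmx1.
Qed.

Lemma rho_tr : \tr (max_ent_vec fa fb *m adjmx (max_ent_vec fa fb)) = 1.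
Proof. by rewrite mxtrace_mulC phi_norm mxtrace1. Qed.

End Is.

Set Implicit Arguments.
Unset Strict Implicit.
Unset Printing Implicit Defensive.
Import Order.TTheory GRing.Theory Num.Theory.
Local Open Scope ring_scope.
Local Open Scope complex_scope.

Section Js.
Variable R : realType.
Local Notation C := R[i].

Definition gp (t : R) := gz (fun x : R => powR x t).

Lemma Dg_eq n (G1 G2 : R -> R) (l : 'rV[R]_n) :
  (forall i, G1 (l 0 i) = G2 (l 0 i)) -> Dg G1 l = Dg G2 l.
Proof. by move=> h; apply/matrixP => i j; rewrite !DgE h. Qed.

Lemma Dg_row n (G H : R -> R) (l : 'rV[R]_n) :
  Dg G (\row_i H (l 0 i)) = Dg (fun x => G (H x)) l.
Proof. by apply/matrixP => i j; rewrite !DgE mxE. Qed.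

Lemma DgZc n (c : R) (G : R -> R) (l : 'rV[R]_n) :
  c%:C *: Dg G l = Dg (fun x => c * G x) l.
Proof.
apply/matrixP => i j; rewrite !mxE.
by case: (i == j); rewrite ?mulr1n ?mulr0n ?mulr0 //= rmorphM.
Qed.

Lemma pow_scale n k t (l : 'rV[R]_n) : 0 < k -> (forall i, 0 <= l 0 i) ->
  Dg (gz (fun x => powR (k * x) t)) l = (powR k t)%:C *: Dg (gp t) l.
Proof.
move=> hk hl; rewrite DgZc; apply: Dg_eq => i; rewrite /gp /gz.
have kn0 : k != 0 by rewrite gt_eqF.
case: ifP => _; first by rewrite mulr0.
by rewrite powRM // ltW.
Qed.

Lemma mxpow_decomp n (M : 'M[C]_n) V s t : psd_decomp M (V, s) ->
  mxpow M t = V *m Dg (gp t) s *m adjmx V.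
Proof. by move=> h; rewrite /mxpow (mxfun_decomp _ h). Qed.

Lemma mxpow_projtens m n (P : 'M[C]_m) (T : 'M[C]_n) k t V s :
  psdmx P -> P *m P = P -> psd_decomp T (V, s) -> 0 < k ->
  mxpow ((k%:C *: P) *t T) t =
  (powR k t)%:C *: (P *t (V *m Dg (gp t) s *m adjmx V)).
Proof.
move=> hP hPP hT hk; have [[W p] hW] := psd_decomp_ex hP.
rewrite /mxpow (mxfun_projtens _ hW hPP hT hk).
have hs : forall i, 0 <= s 0 i by case: hT => _ [].
by rewrite pow_scale // -scalemxAr -scalemxAl tensZr.
Qed.

End Js.

Set Implicit Arguments.
Unset Strict Implicit.
Unset Printing Implicit Defensive.
Import Order.TTheory GRing.Theory Num.Theory.
Local Open Scope ring_scope.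
Local Open Scope complex_scope.

Section Ks.
Variable R : realType.
Local Notation C := R[i].

Lemma ptrA_ABE_scale a b e c (M : 'M[C]_(a * b * e)) :
  ptrA_ABE (c *: M) = c *: ptrA_ABE M.
Proof. by apply/matrixP => x y; rewrite !mxE mulr_sumr; apply: eq_bigr => i _; rewrite mxE. Qed.

Lemma gp_prod (alpha x : R) : 0 <= x ->
  gp ((alpha - 1) / 2) x * (gp ((1 - alpha) / 2) x * (gp alpha x * (gp ((1 - alpha) / 2) x * gp ((alpha - 1) / 2) x)))
  = gp alpha x.
Proof.
move=> hx; rewrite /gp /gz; case: eqP => [_|/eqP xn0]; first by rewrite mul0r.
have h : powR x ((1 - alpha) / 2) * powR x ((alpha - 1) / 2) = 1.
  rewrite -powRD; last by apply/implyP => _.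
  have -> : (1 - alpha) / 2 + (alpha - 1) / 2 = 0 by ring.
  by rewrite powRr0.
have -> : forall p q r : R, q * (p * (r * (p * q))) = (p * q) * (p * q) * r by move=> p q r; ring.
by rewrite h !mul1r.
Qed.

Lemma gp_inv (alpha x : R) : 0 < alpha -> 0 <= x -> gp alpha^-1 (gp alpha x) = x.
Proof.
move=> ha hx; rewrite /gp /gz; have [->|xn0] := eqVneq x 0; first by rewrite eqxx.
have hp : 0 < powR x alpha by apply: powR_gt0; rewrite lt_def xn0.
rewrite gt_eqF // -powRrM mulfV ?gt_eqF // powRr1 //.
Qed.

Lemma gp_ge0 (t x : R) : 0 <= gp t x.
Proof. by rewrite /gp /gz; case: ifP => // _; apply: powR_ge0. Qed.

Variables (a b d : nat) (hd : (0 < d)%N).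
Variables (fa : 'I_d -> 'cV[C]_a) (fb : 'I_d -> 'cV[C]_b).
Hypotheses (hfa : orthonormal_vecs fa) (hfb : orthonormal_vecs fb).
Variables (alpha : R) (ha0 : 0 < alpha) (ha1 : alpha != 1).

Local Notation phi := (max_ent_vec fa fb).
Local Notation rho := (phi *m adjmx phi).

Lemma rho_sand : (Pj fa *t 1%:M) *m rho *m (Pj fa *t 1%:M) = rho.
Proof.
rewrite mulmxA PA_phi // -mulmxA; congr (_ *m _).
have hP : adjmx (Pj fa *t (1%:M : 'M[C]_b)) = Pj fa *t 1%:M.
  by rewrite adjmx_tens adjmx1; case: (Pj_psd fa) => ->.
by rewrite -{1}hP -adjmxM PA_phi.
Qed.

Lemma sand_lem m n (k : C) (Q r : 'M[C]_m) (A B : 'M[C]_n) :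
  Q *m r *m Q = r ->
  (k *: (Q *t A)) *m (r *t B) *m (k *: (Q *t A)) = (k * k) *: (r *t (A *m B *m A)).
Proof.
by move=> h; rewrite -!scalemxAl -scalemxAr !tensmx_mul h scalerA.
Qed.

Lemma cmi_val e (sigma : 'M[C]_e) : psdmx sigma -> \tr sigma = 1 ->
  renyiCMI alpha (rho *t sigma) = 2 * ln (d%:R : R).
Proof.
move=> hsp htr; have [[V s] hsig] := psd_decomp_ex hsp.
have hs : forall i, 0 <= s 0 i by case: hsig => _ [].
have hV' : adjmx V *m V = 1%:M by case: hsig => hV _; apply: unitary_adjL.
set s1 := (1 - alpha) / 2; set s2 := (alpha - 1) / 2.
set di : R := d%:R^-1.
have hdi : 0 < di by rewrite invr_gt0 ltr0n.
pose sg t := V *m Dg (gp t) s *m adjmx V.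
have pAE : mxpow (ptrB_ABE (rho *t sigma)) s1 = (powR di s1)%:C *: (Pj fa *t sg s1).
  by rewrite ptrB_tens (rho_ptrB fa hfb) (mxpow_projtens s1 (Pj_psd fa) (Pj_proj hfa) hsig hdi).
have pW : mxpow (rho *t sigma) alpha = rho *t sg alpha.
  have -> : rho *t sigma = ((1 : R)%:C *: rho) *t sigma by rewrite rmorph1 scale1r.
  rewrite (mxpow_projtens alpha (psd_gram _) (rho_proj hd hfa hfb) hsig ltr01).
  by rewrite powR1 rmorph1 scale1r.
have pE : mxpow (ptrAB_ABE (rho *t sigma)) s2 = sg s2.
  by rewrite ptrAB_tens (rho_tr hd hfa hfb) scale1r (mxpow_decomp _ hsig).
rewrite /renyiCMI pAE pW pE extAE_scale extAE_tens extE_tens.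
have VDV G1 G2 : (V *m Dg G1 s *m adjmx V) *m (V *m Dg G2 s *m adjmx V) =
    V *m Dg (fun x => G1 x * G2 x) s *m adjmx V.
  by rewrite !mulmxA -(mulmxA _ (adjmx V) V) hV' mulmx1 -(mulmxA V) Dg_mul.
set kA := di `^ s1.
rewrite (sand_lem _ _ _ rho_sand).
rewrite ptrA_ABE_scale ptrA_tens (rho_ptrA fb hfa).
rewrite -scalemxAr -scalemxAl !tensmx_mul mul1mx mulmx1.
rewrite /sg !VDV.
rewrite (@Dg_eq _ _ _ (gp alpha)); last first.
  by move=> i; rewrite -[RHS](gp_prod alpha (hs i)) /s1 /s2; ring.
rewrite -tensZl scalerA -!rmorphM.
have hK : 0 < kA * kA * d%:R^-1.
  by rewrite !mulr_gt0 // /kA powR_gt0.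
have htau : psd_decomp (V *m Dg (gp alpha) s *m adjmx V) (V, \row_i gp alpha (s 0 i)).
  split; first by case: hsig.
  split; first by move=> i; rewrite mxE gp_ge0.
  by rewrite /= [RHS](_ : _ = V *m Dg id (\row_i gp alpha (s 0 i)) *m adjmx V) // Dg_row.
rewrite (mxpow_projtens _ (Pj_psd fb) (Pj_proj hfb) htau hK) Dg_row.
rewrite (@Dg_eq _ _ _ id); last by move=> i; rewrite gp_inv.
have -> : V *m Dg id s *m adjmx V = sigma by case: hsig => _ [_ ->].
rewrite mxtraceZ trace_tens (Pj_tr hfb) htr mulr1 dC -rmorphM /=.
have hdpos : 0 < (d%:R : R) by rewrite ltr0n.
have hkA : 0 < kA by rewrite /kA powR_gt0.
rewrite lnM ?posrE ?powR_gt0 // ln_powR.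
rewrite lnM ?posrE ?mulr_gt0 ?invr_gt0 // lnM ?posrE // lnV ?posrE //.
rewrite /kA ln_powR /di lnV ?posrE // /s1.
have an0 : alpha != 0 by rewrite gt_eqF.
have a1n0 : alpha - 1 != 0 by rewrite subr_eq0.
by field; rewrite an0 a1n0.
Qed.


End Ks.

Set Implicit Arguments.
Unset Strict Implicit.
Unset Printing Implicit Defensive.
Import Order.TTheory GRing.Theory Num.Theory.
Local Open Scope ring_scope.
Local Open Scope complex_scope.

Section Ls.
Variable R : realType.
Local Notation C := R[i].

Lemma quad_tens m n (phi : 'cV[C]_m) (X : 'M[C]_n) u v :
  adjmx phi *m phi = 1%:M ->
  (adjmx (kronv phi u) *m ((phi *m adjmx phi) *t X) *m kronv phi v) 0 0 =
  (adjmx u *m X *m v) 0 0.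
Proof.
move=> hn; rewrite -mulmxA kronv_mul -mulmxA hn mulmx1 kronv_dot hn mxE eqxx mul1r.
by rewrite mulmxA.
Qed.

Lemma tens_psd_inv m n (phi : 'cV[C]_m) (X : 'M[C]_n) :
  adjmx phi *m phi = 1%:M -> psdmx ((phi *m adjmx phi) *t X) -> psdmx X.
Proof.
move=> hn [hH hq]; split.
  apply/matrixP => i j.
  rewrite -[LHS](entry_delta (adjmx X)) -(@quad_tens _ _ phi (adjmx X) _ _ hn).
  have -> : (phi *m adjmx phi) *t adjmx X = adjmx ((phi *m adjmx phi) *t X).
    by rewrite adjmx_tens adjmxM adjmxK.
  by rewrite hH (@quad_tens _ _ phi X _ _ hn) entry_delta.
by move=> v; rewrite -(@quad_tens _ _ phi X _ _ hn); apply: hq.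
Qed.

Lemma psd1 : psdmx (1%:M : 'M[C]_1).
Proof.
split; first exact: adjmx1.
move=> v; rewrite mulmx1 mxE; apply: sumr_ge0 => i _; rewrite adjmxE mulrC.
exact: mul_conjC_ge0.
Qed.

Lemma psd_tens m n (A : 'M[C]_m) (B : 'M[C]_n) : psdmx A -> psdmx B -> psdmx (A *t B).
Proof.
move=> /psd_decomp_ex [[U l] hA] /psd_decomp_ex [[V s] hB].
exact: (decomp_psd (decomp_tens hA hB)).
Qed.

End Ls.


End Helpers.
Import Helpers.
Unset Implicit Arguments.

Theorem corollary1 (R : realType) (alpha : R)
  (halpha : (0 < alpha /\ alpha < 1) \/ (1 < alpha /\ alpha <= 2))
  (a b d : nat) (hd : (0 < d)%N)
  (fa : 'I_d -> 'cV[R[i]]_a) (fb : 'I_d -> 'cV[R[i]]_b)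
  (hfa : orthonormal_vecs fa) (hfb : orthonormal_vecs fb) :
  let phi := max_ent_vec fa fb in
  renyi_sq_ent alpha (phi *m adjmx phi) = ((ln (d%:R : R))%:E)%E.
Proof.
move=> phi.
have ha0 : 0 < alpha by case: halpha => [[]|[h _]] //; apply: lt_trans h.
have ha1 : alpha != 1 by case: halpha => [[_ h]|[h _]]; [rewrite lt_eqF | rewrite gt_eqF].
have hn := phi_norm hd hfa hfb.
rewrite /renyi_sq_ent.
have -> : [set x : \bar R | exists (e : nat) (w : 'M[R[i]]_(a * b * e)),
      densitymx w /\ ptrE w = phi *m adjmx phi /\ x = (renyiCMI alpha w)%:E]%classic =
    [set (2 * ln (d%:R : R))%:E]%classic.
  apply/seteqP; split => x /=.
    move=> [e [w [[hw htr] [hptr ->]]]].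
    have hwE := pure_ext hn hw hptr.
    move: hwE; set sg := sigE phi w; clearbody sg => hwE.
    have hsp : psdmx sg by apply: (tens_psd_inv hn); rewrite -hwE.
    have hst : \tr sg = 1.
      by rewrite -htr hwE trace_tens (rho_tr hd hfa hfb) mul1r.
    by rewrite hwE (cmi_val hd hfa hfb ha0 ha1 hsp hst).
  move=> ->; exists 1%N, ((phi *m adjmx phi) *t (1%:M : 'M[R[i]]_1)).
  split; first split.
  - exact: (psd_tens (psd_gram phi) (@psd1 R)).
  - by rewrite trace_tens (rho_tr hd hfa hfb) mxtrace1 mulr1.
  split; first by rewrite ptrE_tens mxE eqxx mulr1n scale1r.
  by rewrite (cmi_val hd hfa hfb ha0 ha1 (@psd1 R)) // mxtrace1.
rewrite ereal_inf1 -EFinM; congr (_%:E).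
by rewrite mulrA mulVf ?mul1r // pnatr_eq0.
Qed.
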